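(* Assume $\ker(K)\cap\ker(D)=\{0\}$ and fix $\delta\ge0$ and data $y^\delta$. Let $\{\Psi_k\}_{k\in\mathbb{N}}$ be reconstructors and $\Psi$ a reconstructor such that $\sup_{y\in\mathcal{Y}^\delta}\|\Psi_k(y)-\Psi(y)\|_1\to0$ as $k\to\infty$, where $\mathcal{Y}^\delta=\{y\in\mathbb{R}^m:\inf_{x\in\mathcal{X}}\|Kx-y\|_2\le\delta\}$. For each $k$ let $x^*_{\Psi_k,\delta}$ be the unique minimizer over $\mathcal{X}$ of $\mathcal{J}_{\Psi_k,\delta}(x)=\|Kx-y^\delta\|_2^2+\lambda\|w(\Psi_k(y^\delta))\odot|Dx|\|_1$. Then the sequence $\{x^*_{\Psi_k,\delta}\}_{k\in\mathbb{N}}$ is bounded.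
   Context: Let $K\in\mathbb{R}^{m\times n}$ with $m\le n$, and let $D_h,D_v\in\mathbb{R}^{n\times n}$ be the discrete horizontal and vertical difference operators; $Dx=\begin{bmatrix}D_hx\\ D_vx\end{bmatrix}\in\mathbb{R}^{2n}$, and $|Dx|\in\mathbb{R}^n$, $(|Dx|)_i=\sqrt{(D_hx)_i^2+(D_vx)_i^2}$. $\mathcal{X}=\{x\in\mathbb{R}^n: x_i\ge 0\ \forall i\}$. Fix $\lambda>0$, $\eta>0$, $p\in(0,1)$, and for $\tilde x\in\mathbb{R}^n$ define $(w(\tilde{x}))_i=\big(\eta/\sqrt{\eta^2+(|D\tilde{x}|)_i^2}\big)^{1-p}$. A reconstructor is a Lipschitz continuous map $\Psi:\mathbb{R}^m\to\mathbb{R}^n$. The data is $y^\delta=Kx^{GT}+e$ with $x^{GT}\in\mathcal{X}$ and $\|e\|_2\le\delta$. $\odot$ is the entrywise product. *)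

(* Defs.v *)
From HB Require Import structures.
From mathcomp Require Import all_boot all_order all_algebra.
From mathcomp Require Import classical_sets reals exp.
Set Implicit Arguments. Unset Strict Implicit. Unset Printing Implicit Defensive.
Import Order.TTheory GRing.Theory Num.Theory.
Local Open Scope classical_set_scope.
Local Open Scope ring_scope.

Definition norm2 (R : realType) (k : nat) (v : 'cV[R]_k) : R :=
  Num.sqrt (\sum_(i < k) v i 0 ^+ 2).
Definition norm1 (R : realType) (k : nat) (v : 'cV[R]_k) : R :=
  \sum_(i < k) `|v i 0|.

(* the nonnegative orthant X *)
Definition nonneg (R : realType) (n : nat) (x : 'cV[R]_n) : Prop :=
  forall i, 0 <= x i 0.

Definition Dop (R : realType) (n : nat) (Dh Dv : 'M[R]_n) (x : 'cV[R]_n)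
  : 'cV[R]_(n + n) := col_mx (Dh *m x) (Dv *m x).

Definition absD (R : realType) (n : nat) (Dh Dv : 'M[R]_n) (x : 'cV[R]_n)
  : 'cV[R]_n :=
  \col_i Num.sqrt ((Dh *m x) i 0 ^+ 2 + (Dv *m x) i 0 ^+ 2).

Definition weight (R : realType) (n : nat) (Dh Dv : 'M[R]_n) (eta p : R)
  (xt : 'cV[R]_n) : 'cV[R]_n :=
  \col_i powR (eta / Num.sqrt (eta ^+ 2 + absD Dh Dv xt i 0 ^+ 2)) (1 - p).

Definition Jfun (R : realType) (m n : nat) (K : 'M[R]_(m, n)) (Dh Dv : 'M[R]_n)
  (lam eta p : R) (y : 'cV[R]_m) (xt : 'cV[R]_n) (x : 'cV[R]_n) : R :=
  norm2 (K *m x - y) ^+ 2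
  + lam * norm1 (\col_i (weight Dh Dv eta p xt i 0 * absD Dh Dv x i 0)).

Definition Ydelta (R : realType) (m n : nat) (K : 'M[R]_(m, n)) (delta : R)
  (y : 'cV[R]_m) : Prop :=
  inf [set r : R | exists2 x, nonneg x & r = norm2 (K *m x - y)] <= delta.

(* reconstructor = Lipschitz continuous map R^m -> R^n (w.r.t. Euclidean norms) *)
Definition lipschitz (R : realType) (m n : nat) (Psi : 'cV[R]_m -> 'cV[R]_n)
  : Prop :=
  exists L : R, forall y1 y2, norm2 (Psi y1 - Psi y2) <= L * norm2 (y1 - y2).

(* Main.v *)
Require Import Defs.
From HB Require Import structures.
From mathcomp Require Import all_boot all_order all_algebra.
From mathcomp Require Import classical_sets reals exp lra.
Import Order.TTheory GRing.Theory Num.Theory.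
Local Open Scope ring_scope.

Section H.
Context {R : realType}.

Lemma le_sum_term (I : finType) (F : I -> R) i :
  (forall j, 0 <= F j) -> F i <= \sum_j F j.
Proof.
move=> h; rewrite (bigD1 i) //= lerDl; apply: sumr_ge0 => j _; exact: h.
Qed.

Lemma norm2_ge0 k (v : 'cV[R]_k) : 0 <= norm2 v.
Proof. exact: sqrtr_ge0. Qed.

Lemma entry_le_norm2 k (v : 'cV[R]_k) i : `|v i 0| <= norm2 v.
Proof.
rewrite /norm2 -sqrtr_sqr; apply: ler_wsqrtr.
by apply: (@le_sum_term _ (fun j => v j 0 ^+ 2)) => j; exact: sqr_ge0.
Qed.

Lemma entry_le_norm1 k (v : 'cV[R]_k) i : `|v i 0| <= norm1 v.
Proof. by apply: (@le_sum_term _ (fun j => `|v j 0|)) => j. Qed.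

Lemma norm2_bound k (v : 'cV[R]_k) (C : R) :
  (forall i, `|v i 0| <= C) -> norm2 v <= Num.sqrt (k%:R * C ^+ 2).
Proof.
move=> h; apply: ler_wsqrtr.
have -> : k%:R * C ^+ 2 = \sum_(i < k) C ^+ 2 by rewrite sumr_const card_ord mulr_natl.
apply: ler_sum => i _.
have := h i; rewrite ler_norml => /andP [h1 h2]; nra.
Qed.

Lemma mul_entry_bound k l (A : 'M[R]_(k, l)) (v : 'cV[R]_l) (C : R) i : 0 <= C ->
  (forall j, `|v j 0| <= C) ->
  `|(A *m v) i 0| <= (\sum_i' \sum_j `|A i' j|) * C.
Proof.
move=> C0 h.
rewrite mxE; apply: le_trans (ler_norm_sum _ _ _) _.
apply: (@le_trans _ _ ((\sum_j `|A i j|) * C)).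
  rewrite mulr_suml; apply: ler_sum => j _; rewrite normrM.
  by apply: ler_wpM2l => //.
apply: ler_wpM2r => //.
by apply: (@le_sum_term _ (fun i' => \sum_j `|A i' j|)) => j; apply: sumr_ge0.
Qed.

Lemma sqrt_sum_le (a b : R) : Num.sqrt (a ^+ 2 + b ^+ 2) <= `|a| + `|b|.
Proof.
rewrite -(ger0_norm (addr_ge0 (normr_ge0 a) (normr_ge0 b))) -sqrtr_sqr.
apply: ler_wsqrtr.
have ha : a ^+ 2 = `|a| ^+ 2 by rewrite real_normK ?num_real.
have hb : b ^+ 2 = `|b| ^+ 2 by rewrite real_normK ?num_real.
rewrite ha hb; have := normr_ge0 a; have := normr_ge0 b.
set x := `|a|; set y := `|b|; move=> *; nra.
Qed.

Lemma le_sqrt_sum (a b : R) : `|a| <= Num.sqrt (a ^+ 2 + b ^+ 2).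
Proof. rewrite -sqrtr_sqr; apply: ler_wsqrtr; by rewrite lerDl sqr_ge0. Qed.
End H.
Lemma le_sqrt_sum2 {R : realType} (a b : R) : `|a| <= Num.sqrt (a ^+ 2 + b ^+ 2).
Proof. rewrite -sqrtr_sqr; apply: ler_wsqrtr; by rewrite lerDl sqr_ge0. Qed.

Lemma weight_lb {R : realType} n (Dh Dv : 'M[R]_n) (eta p a : R) xt i :
  0 < eta -> 0 < p -> p < 1 -> absD Dh Dv xt i 0 <= a ->
  eta / Num.sqrt (eta ^+ 2 + a ^+ 2) <= weight Dh Dv eta p xt i 0.
Proof.
move=> e0 p0 p1 ha.
set d := absD Dh Dv xt i 0.
have d0 : 0 <= d by rewrite /d mxE sqrtr_ge0.
have s0 : 0 < Num.sqrt (eta ^+ 2 + d ^+ 2).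
  by rewrite sqrtr_gt0; apply: ltr_wpDr; [exact: sqr_ge0 | exact: exprn_gt0].
have sa0 : 0 < Num.sqrt (eta ^+ 2 + a ^+ 2).
  by rewrite sqrtr_gt0; apply: ltr_wpDr; [exact: sqr_ge0 | exact: exprn_gt0].
rewrite mxE -/d.
apply: le_trans (ger1_powR _ _); last first.
- lra.
- apply/andP; split; first exact: divr_gt0.
  rewrite ler_pdivrMr // mul1r.
  by have := le_sqrt_sum2 eta d; rewrite gtr0_norm.
apply: ler_wpM2l; first exact: ltW.
rewrite lef_pV2 ?posrE //; apply: ler_wsqrtr; rewrite lerD2l.
have h1 : 0 <= a - d by rewrite subr_ge0.
have h2 : 0 <= a + d by apply: addr_ge0 => //; apply: le_trans ha.
have := mulr_ge0 h1 h2; rewrite -subr_sqr subr_ge0 //.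
Qed.
Lemma left_inv {R : realType} (p n : nat) (A : 'M[R]_(p, n)) :
  (forall x : 'cV[R]_n, A *m x = 0 -> x = 0) ->
  exists B : 'M[R]_(n, p), B *m A = 1%:M.
Proof.
move=> inj.
have : row_free A^T.
  rewrite -kermx_eq0; apply/eqP/row_matrixP => i.
  rewrite row0.
  have h := mulmx_ker A^T.
  have hi : row i (kermx A^T) *m A^T = 0 by rewrite -row_mul h row0.
  have : A *m (row i (kermx A^T))^T = 0.
    by rewrite -[A in A *m _]trmxK -trmx_mul hi trmx0.
  by move/inj => /(congr1 trmx); rewrite trmxK trmx0.
case/row_freeP => B hB; exists B^T.
by rewrite -[A]trmxK -trmx_mul hB trmx1.
Qed.

Lemma norm1_tri {R : realType} k (a b : 'cV[R]_k) : norm1 a <= norm1 (a - b) + norm1 b.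
Proof.
rewrite /norm1 -big_split; apply: ler_sum => i _ /=.
rewrite !mxE; have -> : a i 0 = (a i 0 - b i 0) + b i 0 by rewrite subrK.
by rewrite addrK ler_normD.
Qed.

Lemma norm2N {R : realType} k (a : 'cV[R]_k) : norm2 (- a) = norm2 a.
Proof. by rewrite /norm2; congr Num.sqrt; apply: eq_bigr => i _; rewrite mxE sqrrN. Qed.

Lemma norm1_ge0 {R : realType} {k} (a : 'cV[R]_k) : 0 <= norm1 a.
Proof. by apply: sumr_ge0. Qed.

Lemma absD_le {R : realType} n (Dh Dv : 'M[R]_n) z i :
  absD Dh Dv z i 0 <= ((\sum_i' \sum_j `|Dh i' j|) + (\sum_i' \sum_j `|Dv i' j|)) * norm1 z.
Proof.
rewrite mxE mulrDl; apply: le_trans; first exact: sqrt_sum_le.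
apply: lerD; apply: mul_entry_bound; try exact: norm1_ge0; move=> j; exact: entry_le_norm1.
Qed.
Lemma absD_geh {R : realType} n (Dh Dv : 'M[R]_n) x i :
  `|(Dh *m x) i 0| <= absD Dh Dv x i 0.
Proof. rewrite /absD; set u := (Dh *m x) i 0; set v := (Dv *m x) i 0; rewrite mxE; exact: le_sqrt_sum2. Qed.

Lemma absD_gev {R : realType} n (Dh Dv : 'M[R]_n) x i :
  `|(Dv *m x) i 0| <= absD Dh Dv x i 0.
Proof. rewrite /absD; set u := (Dh *m x) i 0; set v := (Dv *m x) i 0; rewrite mxE addrC; exact: le_sqrt_sum2. Qed.

Lemma absD_ge0 {R : realType} n (Dh Dv : 'M[R]_n) x i : 0 <= absD Dh Dv x i 0.
Proof. rewrite /absD mxE; exact: sqrtr_ge0. Qed.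

Lemma J0 {R : realType} m n (K : 'M[R]_(m, n)) Dh Dv lam eta p y xt :
  Jfun K Dh Dv lam eta p y xt 0 = norm2 (K *m 0 - y) ^+ 2.
Proof.
rewrite /Jfun /norm1 big1 ?mulr0 ?addr0 // => i _.
rewrite /absD !mulmx0 !mxE /= expr0n /= addr0 sqrtr0 mulr0 normr0 //.
Qed.

Theorem lemma10 (R : realType) (m n : nat) (K : 'M[R]_(m, n))
  (Dh Dv : 'M[R]_n) (lam eta p : R) (delta : R)
  (xGT : 'cV[R]_n) (e : 'cV[R]_m) (ydelta : 'cV[R]_m)
  (Psik : nat -> 'cV[R]_m -> 'cV[R]_n) (Psi : 'cV[R]_m -> 'cV[R]_n)
  (xstar : nat -> 'cV[R]_n) :
  (m <= n)%N ->
  0 < lam -> 0 < eta -> 0 < p -> p < 1 ->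
  (forall x : 'cV[R]_n, K *m x = 0 -> Dop Dh Dv x = 0 -> x = 0) ->
  0 <= delta ->
  nonneg xGT -> norm2 e <= delta -> ydelta = K *m xGT + e ->
  (forall k, lipschitz (Psik k)) -> lipschitz Psi ->
  (forall eps : R, 0 < eps -> exists N : nat, forall k : nat, (N <= k)%N ->
     forall y, Ydelta K delta y -> norm1 (Psik k y - Psi y) <= eps) ->
  (forall k, nonneg (xstar k) /\
     (forall x, nonneg x ->
        Jfun K Dh Dv lam eta p ydelta (Psik k ydelta) (xstar k)
        <= Jfun K Dh Dv lam eta p ydelta (Psik k ydelta) x) /\
     (forall x', nonneg x' ->
        (forall x, nonneg x ->
           Jfun K Dh Dv lam eta p ydelta (Psik k ydelta) x'
           <= Jfun K Dh Dv lam eta p ydelta (Psik k ydelta) x) ->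
        x' = xstar k)) ->
  exists M : R, forall k, norm2 (xstar k) <= M.
Proof.

Proof.
move=> _ lam0 eta0 p0 p1 inj _ hGT he hy _ _ hconv hmin.
set y := ydelta.
have hY : Ydelta K delta y.
  rewrite /Ydelta; apply: le_trans (_ : _ <= norm2 (K *m xGT - y)) _.
    have hl : has_lbound [set r : R | exists2 x, nonneg x & r = norm2 (K *m x - y)].
      by exists 0 => r [x _ ->]; exact: norm2_ge0.
    by have := ge_inf hl; move/lbP => H; apply: H; exists xGT.
  by rewrite /y hy opprD addrA subrr add0r norm2N.
have [N hN] := hconv 1 ltr01.
set Bz := norm1 (Psi y) + 1 + \sum_(k < N) norm1 (Psik k y).
have hBz : forall k, norm1 (Psik k y) <= Bz.
  move=> k; have h0 := @norm1_ge0 _ _ (Psi y).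
  have hS : 0 <= \sum_(k < N) norm1 (Psik k y) by apply: sumr_ge0 => i _; exact: norm1_ge0.
  case: (leqP N k) => hk.
    apply: le_trans (@norm1_tri _ _ (Psik k y) (Psi y)) _.
    have := hN k hk y hY; rewrite /Bz; lra.
  have := @le_sum_term _ _ (fun i : 'I_N => norm1 (Psik i y)) (Ordinal hk) (fun i => norm1_ge0 _).
  rewrite /= /Bz; lra.
have Bz0 : 0 <= Bz by apply: le_trans (hBz 0%N); exact: norm1_ge0.
set SD := (\sum_i' \sum_j `|Dh i' j|) + (\sum_i' \sum_j `|Dv i' j|).
have SD0 : 0 <= SD by apply: addr_ge0; apply: sumr_ge0 => i _; apply: sumr_ge0.
set a := SD * Bz.
set wmin := eta / Num.sqrt (eta ^+ 2 + a ^+ 2).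
have wmin0 : 0 < wmin.
  apply: divr_gt0 => //; rewrite sqrtr_gt0; apply: ltr_wpDr; [exact: sqr_ge0 | exact: exprn_gt0].
have hw : forall k i, wmin <= weight Dh Dv eta p (Psik k y) i 0.
  move=> k i; apply: weight_lb => //; apply: le_trans; first exact: absD_le.
  by apply: ler_wpM2l.
set c := norm2 (K *m 0 - y).
have c0 : 0 <= c by exact: norm2_ge0.
set A := col_mx K (col_mx Dh Dv).
have [B hB] : exists B : 'M[R]_(n, m + (n + n)), B *m A = 1%:M.
  apply: left_inv => x; rewrite /A !mul_col_mx -col_mx0 => /eq_col_mx [h1 h2].
  by apply: inj => //; rewrite /Dop h2.
set C := c + norm2 y + c ^+ 2 / lam / wmin.
have C0 : 0 <= C.
  apply: addr_ge0; first by apply: addr_ge0 => //; exact: norm2_ge0.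
  by apply: divr_ge0; [apply: divr_ge0; [exact: sqr_ge0 | exact: ltW] | exact: ltW].
set SB := \sum_i' \sum_j `|B i' j|.
have SB0 : 0 <= SB by apply: sumr_ge0 => i _; apply: sumr_ge0.
exists (Num.sqrt (n%:R * (SB * C) ^+ 2)) => k.
apply: norm2_bound => i.
have [hn [hm _]] := hmin k.
set xk := xstar k.
have hx : xk = B *m (A *m xk) by rewrite mulmxA hB mul1mx.
rewrite hx; apply: mul_entry_bound; first exact: C0.
have hJ := hm 0 (fun i => ltac:(by rewrite mxE)).
rewrite J0 -/c /Jfun -/y -/xk in hJ.
set T1 := norm2 (K *m xk - y) in hJ.
set T2 := norm1 _ in hJ.
have T10 : 0 <= T1 by exact: norm2_ge0.
have T20 : 0 <= T2 by exact: norm1_ge0.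
have hT1 : T1 <= c by nra.
have hT2 : T2 <= c ^+ 2 / lam by rewrite ler_pdivlMr //; nra.
have hD : forall i, absD Dh Dv xk i 0 <= c ^+ 2 / lam / wmin.
  move=> i'; rewrite ler_pdivlMr //.
  have := @entry_le_norm1 _ _ (\col_i (weight Dh Dv eta p (Psik k ydelta) i 0 * absD Dh Dv xk i 0)) i'.
  rewrite -/T2 mxE ger0_norm; last first.
    by apply: mulr_ge0; [rewrite mxE; exact: powR_ge0 | exact: absD_ge0].
  move=> h; apply: le_trans hT2; apply: le_trans h.
  by rewrite mulrC; apply: ler_wpM2r; [exact: absD_ge0 | exact: hw].
have hD0 : 0 <= c ^+ 2 / lam / wmin.
  by apply: divr_ge0; [apply: divr_ge0; [exact: sqr_ge0 | exact: ltW] | exact: ltW].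
have ny0 : 0 <= norm2 y by exact: norm2_ge0.
move=> j; rewrite /A !mul_col_mx -(splitK j); case: (split j) => j' /=.
  rewrite col_mxEu.
  have e1 : (K *m xk - y) j' 0 = (K *m xk) j' 0 - y j' 0 by rewrite !mxE.
  have := ler_normD ((K *m xk) j' 0 - y j' 0) (y j' 0); rewrite subrK -e1.
  have := @entry_le_norm2 _ _ (K *m xk - y) j'; have := @entry_le_norm2 _ _ y j'.
  rewrite -/T1 /C; lra.
rewrite col_mxEd -(splitK j'); case: (split j') => j'' /=.
  rewrite col_mxEu; have := @absD_geh _ _ Dh Dv xk j''; have := hD j''; rewrite /C; lra.
rewrite col_mxEd; have := @absD_gev _ _ Dh Dv xk j''; have := hD j''; rewrite /C; lra.
Qed.
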